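(* Let $n\ge 3$ and $k\ge 1$. For every function $f\colon V(C_n)\to V(C_{3k})$, we have $\gamma(C_n\otimes_f C_{3k})=kn$; moreover, for every minimum dominating set $D$ of $C_n\otimes_f C_{3k}$ and every $g\in V(C_n)$, $|D\cap (\{g\}\times V(C_{3k}))|=k$.
   Context: $C_m$ is the cycle on $m$ vertices; $\gamma$ denotes the domination number. For graphs $G,H$ and a function $f\colon V(G)\to V(H)$, the Sierpiński product $G\otimes_f H$ is the graph with vertex set $V(G)\times V(H)$ and edges of two types: (type 1) $(g,h)(g,h')$ for every $g\in V(G)$ and every edge $hh'\in E(H)$; (type 2) $(g,f(g'))(g',f(g))$ for every edge $gg'\in E(G)$. *)

(* Defs.v *)
From mathcomp Require Import all_boot.
Set Implicit Arguments. Unset Strict Implicit. Unset Printing Implicit Defensive.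

(* The cycle C_m on vertex set 'I_m = {0,...,m-1}: i ~ j iff j = i+1 mod m
   or i = j+1 mod m.  (Used with m >= 3, where it is a simple cycle.) *)
Definition cycle_adj (m : nat) : rel 'I_m :=
  fun i j => (j == (i.+1 %% m) :> nat) || (i == (j.+1 %% m) :> nat).

Definition sierpinski_adj (T U : finType) (eG : rel T) (eH : rel U)
    (f : T -> U) : rel (T * U) :=
  fun x y =>
    ((x.1 == y.1) && eH x.2 y.2) ||
    [&& eG x.1 y.1, x.2 == f y.1 & y.2 == f x.1].

Definition dominating (V : finType) (e : rel V) (D : {set V}) : bool :=
  [forall v, (v \in D) || [exists u in D, e v u]].

Definition domination_number (V : finType) (e : rel V) : nat :=
  \big[minn/#|V|]_(D : {set V} | dominating e D) #|D|.

Definition minimum_dominating (V : finType) (e : rel V) (D : {set V}) : bool :=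
  dominating e D && (#|D| == domination_number e).

(* Main.v *)
Require Import Defs.
From mathcomp Require Import all_boot.
From mathcomp Require Import zify.
Set Implicit Arguments. Unset Strict Implicit.

Lemma card_le1_mod m (h : nat) : #|[set h' : 'I_m | h == h'.+1 %% m]| <= 1.
Proof.
apply/card_le1_eqP => x y; rewrite !inE => /eqP hx /eqP hy.
apply: val_inj => /=.
rewrite -(modn_small (ltn_ord x)) -(modn_small (ltn_ord y)); apply/eqP.
by rewrite -(eqn_modDr 1) !addn1 -hx -hy.
Qed.

Lemma card_le1_eq m (h : nat) : #|[set h' : 'I_m | h' == h :> nat]| <= 1.
Proof.
apply/card_le1_eqP => x y; rewrite !inE => /eqP hx /eqP hy.
by apply: val_inj; rewrite /= hx hy.
Qed.

Lemma card_nbr m (h : 'I_m) : #|[set h' : 'I_m | cycle_adj h' h]| <= 2.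
Proof.
have -> : [set h' | cycle_adj h' h] = [set h' : 'I_m | h == h'.+1 %% m :> nat] :|:
   [set h' : 'I_m | h' == h.+1 %% m :> nat].
  by apply/setP=> x; rewrite !inE /cycle_adj.
apply: leq_trans (leq_card_setU _ _) _.
by rewrite -[2]/(1+1); apply: leq_add; [apply: card_le1_mod | apply: card_le1_eq].
Qed.

Lemma card_nbr' m (h : 'I_m) : #|[set h' : 'I_m | cycle_adj h h']| <= 2.
Proof.
have -> : [set h' | cycle_adj h h'] = [set h' : 'I_m | cycle_adj h' h].
  by apply/setP=> x; rewrite !inE /cycle_adj orbC.
exact: card_nbr.
Qed.

Lemma card_cnbr m (h : 'I_m) : #|[set h' : 'I_m | (h' == h) || cycle_adj h' h]| <= 3.
Proof.
have -> : [set h' : 'I_m | (h' == h) || cycle_adj h' h] = [set h] :|: [set h' | cycle_adj h' h].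
  by apply/setP=> x; rewrite !inE.
apply: leq_trans (leq_card_setU _ _) _.
by rewrite cards1 add1n ltnS card_nbr.
Qed.

Lemma card_bigcup_le (T I : finType) (A : {pred I}) (F : I -> {set T}) :
  #|\bigcup_(i in A) F i| <= \sum_(i in A) #|F i|.
Proof.
elim/big_rec2: _ => [|i y x _ h]; first by rewrite cards0.
apply: leq_trans (leq_card_setU _ _) _.
exact: leq_add.
Qed.

Lemma fiber_card (T U : finType) (D : {set T * U}) g :
  #|D :&: [set x | x.1 == g]| = #|[set h | (g, h) \in D]|.
Proof.
have -> : D :&: [set x | x.1 == g] = (pair g) @: [set h | (g, h) \in D].
  apply/setP => [[a b]]; rewrite !inE /=; apply/idP/idP.
  - by case/andP => hD /eqP ea; subst a; apply/imsetP; exists b; rewrite ?inE.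
  - by case/imsetP => h; rewrite inE => hD [-> ->]; rewrite hD eqxx.
by rewrite card_imset // => x y [].
Qed.

Lemma fiber_lb n k (f : 'I_n -> 'I_(3 * k)) D
  (hD : dominating (sierpinski_adj (@cycle_adj n) (@cycle_adj (3 * k)) f) D) g :
  k <= #|D :&: [set x | x.1 == g]|.
Proof.
rewrite fiber_card; set Dg := [set h | (g, h) \in D].
have cov : [set: 'I_(3 * k)] \subset (\bigcup_(h in Dg) [set h' | (h' == h) || cycle_adj h' h])
   :|: (f @: [set g' | cycle_adj g g']).
  apply/subsetP => h' _.
  move/forallP: hD => /(_ (g, h')) /orP [inD | /existsP [u /andP [uD adj]]].
  - rewrite inE; apply/orP; left; apply/bigcupP; exists h'; by rewrite !inE ?eqxx.
  - case: u uD adj => u1 u2 uD; rewrite /sierpinski_adj /=.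
    case/orP => [/andP [/eqP gu a] | /and3P [a /eqP e1 e2]].
    + rewrite inE; apply/orP; left; apply/bigcupP; exists u2; rewrite !inE ?gu ?a ?orbT //.
    + rewrite inE; apply/orP; right; apply/imsetP; exists u1; by rewrite ?inE.
have := subset_leq_card cov.
rewrite cardsT card_ord => H.
set A := \bigcup_(h in Dg) _ in H; set B := f @: _ in H.
have [H2 _] := leq_card_setU A B.
have H3 : #|A| <= #|Dg| * 3.
  apply: leq_trans (@card_bigcup_le _ _ _ _) _.
  rewrite -sum_nat_const; apply: leq_sum => i _; exact: card_cnbr.
have H4 : #|B| <= 2.
  exact: leq_trans (leq_imset_card _ _) (card_nbr' g).
move: H H2 H3 H4; move: #|A :|: B| #|A| #|B| #|Dg| => a b c d; lia.
Qed.

Lemma count3 k : #|[set h : 'I_(3 * k) | h %% 3 == 1]| = k.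
Proof.
rewrite -sum1_card big_mkcond /=.
under eq_bigr do rewrite inE.
rewrite -(big_mkord xpredT (fun i => if i %% 3 == 1 then 1 else 0)).
elim: k => [|k IH]; first by rewrite muln0 big_geq.
rewrite mulnS addnC !addnS addn0 !big_nat_recr //= IH.
have e0 : (3 * k) %% 3 = 0 by lia.
have e1 : (3 * k).+1 %% 3 = 1 by lia.
have e2 : (3 * k).+2 %% 3 = 2 by lia.
by rewrite e0 e1 e2 /=; lia.
Qed.

Lemma dom0 n k (f : 'I_n -> 'I_(3 * k)) :
  dominating (sierpinski_adj (@cycle_adj n) (@cycle_adj (3 * k)) f)
    [set x : 'I_n * 'I_(3 * k) | x.2 %% 3 == 1].
Proof.
apply/forallP => [[g h]]; rewrite inE /=.
have hl : h < 3 * k := ltn_ord h.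
case: (boolP (h %% 3 == 1)) => [h1|h1]; first by apply/orP; left.
apply/orP; right.
have : (h %% 3 == 0) || (h %% 3 == 2) by lia.
case/orP => [/eqP h0 | /eqP h2].
- have lt : h.+1 < 3 * k by lia.
  apply/existsP; exists (g, Ordinal lt); rewrite !inE /=.
  have -> : h.+1 %% 3 == 1 by lia.
  rewrite /sierpinski_adj /= (eqxx g) /= /cycle_adj /= modn_small //.
  by rewrite eqxx.
- have lt : h.-1 < 3 * k by lia.
  apply/existsP; exists (g, Ordinal lt); rewrite !inE /=.
  have -> : h.-1 %% 3 == 1 by lia.
  have hp : 0 < h by lia.
  rewrite /sierpinski_adj /= (eqxx g) /= /cycle_adj /= prednK // (modn_small hl).
  by rewrite eqxx !orbT.
Qed.

Lemma card_D0 n k : #|[set x : 'I_n * 'I_(3 * k) | x.2 %% 3 == 1]| = k * n.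
Proof.
have -> : [set x : 'I_n * 'I_(3 * k) | x.2 %% 3 == 1] =
   setX [set: 'I_n] [set h : 'I_(3 * k) | h %% 3 == 1].
  by apply/setP => [[a b]]; rewrite !inE.
by rewrite cardsX cardsT card_ord count3 mulnC.
Qed.

Lemma total_fib (n : nat) (U : finType) (D : {set 'I_n * U}) :
  #|D| = \sum_(g < n) #|D :&: [set x | x.1 == g]|.
Proof.
rewrite -sum1_card (partition_big fst xpredT) //=.
apply: eq_bigr => j _; rewrite -sum1_card; apply: eq_bigl => x; by rewrite !inE.
Qed.
Lemma bigmin_le (I : finType) (P : pred I) (F : I -> nat) x i0 :
  P i0 -> \big[minn/x]_(i | P i) F i <= F i0.
Proof.
move=> Pi0; have : i0 \in index_enum I by rewrite mem_index_enum.
elim: (index_enum I) => [//|a r IH]; rewrite inE big_cons.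
case/orP => [/eqP <- | ir].
- by rewrite Pi0 geq_minl.
- case: (P a); last exact: IH.
  exact: leq_trans (geq_minr _ _) (IH ir).
Qed.
Unset Implicit Arguments. Set Strict Implicit.

Theorem mainTheorem11 (n k : nat) (hn : 3 <= n) (hk : 1 <= k)
    (f : 'I_n -> 'I_(3 * k)) :
  domination_number (sierpinski_adj (@cycle_adj n) (@cycle_adj (3 * k)) f)
    = k * n /\
  (forall D : {set 'I_n * 'I_(3 * k)},
     minimum_dominating (sierpinski_adj (@cycle_adj n) (@cycle_adj (3 * k)) f) D ->
     forall g : 'I_n, #|D :&: [set x | x.1 == g]| = k).
Proof.
set e := sierpinski_adj _ _ f.
have lb : forall D, dominating e D -> k * n <= #|D|.
  move=> D hD; rewrite total_fib.
  apply: leq_trans _ (leq_sum _ (fun g _ => fiber_lb hD g)).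
  by rewrite sum_nat_const card_ord mulnC.
have dn : domination_number e = k * n.
  apply/eqP; rewrite eqn_leq; apply/andP; split.
  - rewrite -(card_D0 n k) /domination_number; apply: bigmin_le; exact: dom0.
  - rewrite /domination_number; apply: (big_ind (fun x => k * n <= x)).
    + rewrite card_prod !card_ord; lia.
    + by move=> x y hx hy; rewrite leq_min hx hy.
    + exact: lb.
split => // D /andP [hD /eqP hc] g.
have hge := fiber_lb hD g.
have := total_fib D; rewrite hc dn (bigD1 g) //= => hs.
have : (n.-1) * k <= \sum_(i < n | i != g) #|D :&: [set x | x.1 == i]|.
  apply: leq_trans _ (leq_sum _ (fun i _ => fiber_lb hD i)).
  by rewrite sum_nat_const cardC1 card_ord.
have hkn : k * n = n.-1 * k + k.
  by rewrite -mulSnr prednK ?(ltn_trans _ hn) // mulnC.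
move=> hle; move: hkn hle hs hge.
move: (k * n) (n.-1 * k) (\sum_(i < n | i != g) #|D :&: [set x | x.1 == i]|) => a b c.
move: #|D :&: [set x | x.1 == g]| => d; lia.
Qed.
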